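(* Consider a mean-variance team stochastic game as described in the context, and let $\tilde{\boldsymbol{\mu}}$ and the sets $\mathcal{D}_1^{\tilde{\boldsymbol{\mu}}},\dots,\mathcal{D}_N^{\tilde{\boldsymbol{\mu}}}$ be the output of Algorithm Modified MV-MAPI (described in the context). Let $\mathcal{D}^{\tilde{\boldsymbol{\mu}}}=\{(\mu_i,\tilde{\boldsymbol{\mu}}_{-i}):i\in\mathcal{N},\ \mu_i\in\mathcal{D}_i^{\tilde{\boldsymbol{\mu}}}\}$ and $\widetilde{\mathcal{D}}=\mathcal{D}\setminus\mathcal{D}^{\tilde{\boldsymbol{\mu}}}$. Then: (1) $J(\tilde{\boldsymbol{\mu}})=J(\boldsymbol{\mu})$ for all $\boldsymbol{\mu}\in\mathcal{D}^{\tilde{\boldsymbol{\mu}}}$, and $\widetilde{\mathcal{D}}$ is a valid pruned joint policy space, i.e. $\widetilde{\mathcal{D}}$ contains a joint policy $\boldsymbol{\mu}^*$ with $J(\boldsymbol{\mu}^* )=\max_{\boldsymbol{\mu}\in\mathcal{U}}J(\boldsymbol{\mu})$. (2) $\tilde{\boldsymbol{\mu}}$ is a strict local Nash equilibrium in the mixed joint policy space induced by $\widetilde{\mathcal{D}}$: there exists $\bar\delta\in(0,1]$ such that for all $\delta\in(0,\bar\delta]$, every agent $i\in\mathcal{N}$ and every deterministic policy $\mu_i\neq\tilde\mu_i$ of agent $i$ with $(\mu_i,\tilde{\boldsymbol{\mu}}_{-i})\in\widetilde{\mathcal{D}}$, we have $J(\tilde{\boldsymbol{\mu}})>J((1-\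delta)\tilde\mu_i+\delta\mu_i,\tilde{\boldsymbol{\mu}}_{-i})$.
   Context: Game: finite agents $\mathcal{N}=\{1,\dots,N\}$, finite state space $\mathcal{S}$, finite action sets $\mathcal{A}_i$, $\mathcal{A}=\prod_i\mathcal{A}_i$, transition kernel $P(s'|s,\boldsymbol{a})$, common reward $r:\mathcal{S}\times\mathcal{A}\to\mathbb{R}$. Policies $\mu_i:\mathcal{S}\to\Delta(\mathcal{A}_i)$ (set $\mathcal{U}_i$; deterministic policies are maps $\mathcal{S}\to\mathcal{A}_i$); joint policies $\boldsymbol{\mu}\in\mathcal{U}=\prod_i\mathcal{U}_i$ with $\boldsymbol{\mu}(\boldsymbol{a}|s)=\prod_i\mu_i(a_i|s)$; $\mathcal{D}$ is the set of deterministic joint policies; $(\mu_i,\boldsymbol{\mu}_{-i})$ means agent $i$ uses $\mu_i$, others use $\boldsymbol{\mu}_{-i}$; $(1-\delta)\tilde\mu_i+\delta\mu_i$ is the policy $s\mapsto(1-\delta)\tilde\mu_i(\cdot|s)+\delta\mu_i(\cdot|s)$. Standing assumption: the chain $P^{\boldsymbol{\mu}}(s'|s)=\sum_{\boldsymbol{a}}\boldsymbol{\mu}(\boldsymbol{a}|s)P(s'|s,\boldsymbol{a})$ is ergodic for every $\boldsymbol{\mu}\in\mathcal{U}$, stationary distribution $\pi^{\boldsymbol{\mu}}$. $\eta(\boldsymbol{\mu})=\sum_s\pi^{\boldsymbol{\mu}}(s)\sum_{\boldsymbol{a}}\boldsymbol{\mu}(\boldsymbol{a}|s)r(s,\boldsymbol{a})$;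 $\zeta(\boldsymbol{\mu})=\sum_s\pi^{\boldsymbol{\mu}}(s)\sum_{\boldsymbol{a}}\boldsymbol{\mu}(\boldsymbol{a}|s)(r(s,\boldsymbol{a})-\eta(\boldsymbol{\mu}))^2$; for fixed $\beta\ge0$, $J(\boldsymbol{\mu})=\eta(\boldsymbol{\mu})-\beta\zeta(\boldsymbol{\mu})$. $f^{\boldsymbol{\mu}}(s,\boldsymbol{a})=r(s,\boldsymbol{a})-\beta(r(s,\boldsymbol{a})-\eta(\boldsymbol{\mu}))^2$, $f^{\boldsymbol{\mu}}(s)=\sum_{\boldsymbol{a}}\boldsymbol{\mu}(\boldsymbol{a}|s)f^{\boldsymbol{\mu}}(s,\boldsymbol{a})$; $V_f^{\boldsymbol{\mu}}$ solves $V(s)=f^{\boldsymbol{\mu}}(s)-J(\boldsymbol{\mu})+\sum_{s'}P^{\boldsymbol{\mu}}(s'|s)V(s')$ (unique up to an additive constant); $Q_f^{\boldsymbol{\mu}}(s,\boldsymbol{a})=f^{\boldsymbol{\mu}}(s,\boldsymbol{a})-J(\boldsymbol{\mu})+\sum_{s'}P(s'|s,\boldsymbol{a})V_f^{\boldsymbol{\mu}}(s')$, $A_f^{\boldsymbol{\mu}}=Q_f^{\boldsymbol{\mu}}-V_f^{\boldsymbol{\mu}}$. Algorithm MV-MAPI (from a deterministic initial joint policy $\boldsymbol{\mu}^{(0)}$): for $k=0,1,\dots$: set $\hat{\boldsymbol{\mu}}^{(k,0)}=\boldsymbol{\mu}^{(k)}$, draw a random permutation $i_1,\dots,i_N$;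 for $h=1,\dots,N$, for every $s$ set $\mu^{(k+1)}_{i_h}(s)$ to an action maximizing $\mathbb{E}_{\boldsymbol{a}_{-i_h}\sim\hat{\boldsymbol{\mu}}^{(k,h-1)}_{-i_h}(\cdot|s)}[A_f^{\hat{\boldsymbol{\mu}}^{(k,h-1)}}(s,a_{i_h},\boldsymbol{a}_{-i_h})]$ (keeping $\mu^{(k)}_{i_h}(s)$ if it attains the maximum) and set $\hat{\boldsymbol{\mu}}^{(k,h)}=(\mu^{(k+1)}_{i_1},\dots,\mu^{(k+1)}_{i_h},\mu^{(k)}_{i_{h+1}},\dots,\mu^{(k)}_{i_N})$; if $\mu^{(k+1)}_i=\mu^{(k)}_i$ for all $i$, return $\boldsymbol{\mu}^{(k)}$, else set $\boldsymbol{\mu}^{(k+1)}=\hat{\boldsymbol{\mu}}^{(k,N)}$. Algorithm Modified MV-MAPI: (Step 1) run MV-MAPI and obtain $\tilde{\boldsymbol{\mu}}$. For each $i=1,\dots,N$: let $\mathcal{D}_i^{\tilde{\boldsymbol{\mu}}}$ be the set of deterministic policies $\mu_i\neq\tilde\mu_i$ of agent $i$ such that for every $s$, $\mu_i(s)\in\arg\max_{a_i}\mathbb{E}_{\boldsymbol{a}_{-i}\sim\tilde{\boldsymbol{\mu}}_{-i}(\cdot|s)}[A_f^{\tilde{\boldsymbol{\mu}}}(s,a_i,\boldsymbol{a}_{-i})]$; if some $\mu_i\in\mathcal{D}_i^{\tilde{\boldsymbol{\mu}}}$ satisfies $\eta(\mu_i,\tilde{\boldsymbol{\mu}}_{-i})\neq\eta(\tilde{\boldsymbol{\mu}})$,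 go back to Step 1 running MV-MAPI from the initial joint policy $(\mu_i,\tilde{\boldsymbol{\mu}}_{-i})$. When the loop over $i$ completes without restarting, output $\tilde{\boldsymbol{\mu}}$ and $\mathcal{D}_1^{\tilde{\boldsymbol{\mu}}},\dots,\mathcal{D}_N^{\tilde{\boldsymbol{\mu}}}$. *)

(* Defs.v *)
From HB Require Import structures.
From mathcomp Require Import all_boot all_order all_algebra all_fingroup.
From mathcomp Require Import reals.
From Stdlib Require Import ClassicalEpsilon.

Unset Implicit Arguments.
Unset Strict Implicit.
Unset Printing Implicit Defensive.
Import Order.TTheory GRing.Theory Num.Theory.
Local Open Scope ring_scope.

Section MVGame.
Variables (R : realType) (N : nat) (A : 'I_N -> finType) (S : finType).

Definition jact := {dffun forall i : 'I_N, A i}.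

Variables (P : S -> jact -> S -> R) (r : S -> jact -> R) (beta : R).

(* (stochastic) joint policies: mu i s a = mu_i(a|s) *)
Definition jpol := forall i : 'I_N, S -> A i -> R.
Definition is_policy (mu : jpol) : Prop :=
  forall i s, (forall a, 0 <= mu i s a) /\ \sum_(a : A i) mu i s a = 1.

Definition dpol := forall i : 'I_N, S -> A i.
Definition detp (d : dpol) : jpol := fun i s a => (a == d i s)%:R.

Definition jprob (mu : jpol) (s : S) (a : jact) : R := \prod_(i < N) mu i s (a i).

Definition upd (mu : jpol) (i : 'I_N) (m : S -> A i -> R) : jpol :=
  fun j => match i =P j with
           | ReflectT e => eq_rect i (fun k => S -> A k -> R) m j e
           | ReflectF _ => mu j end.
Definition dupd (d : dpol) (i : 'I_N) (m : S -> A i) : dpol :=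
  fun j => match i =P j with
           | ReflectT e => eq_rect i (fun k => S -> A k) m j e
           | ReflectF _ => d j end.

Definition mixpol (dt : dpol) (i : 'I_N) (di : S -> A i) (delta : R) : jpol :=
  upd (detp dt) i (fun s a => (1 - delta) * (a == dt i s)%:R + delta * (a == di s)%:R).

Definition PT (mu : jpol) (s s' : S) : R := \sum_(a : jact) jprob mu s a * P s a s'.
Fixpoint Pn (mu : jpol) (t : nat) (s s' : S) : R :=
  match t with
  | 0 => (s == s')%:R
  | t'.+1 => \sum_(u : S) Pn mu t' s u * PT mu u s'
  end.
(* ergodic finite chain: irreducible and aperiodic, i.e. some power of the
   transition matrix is entrywise positive *)
Definition ergodic (mu : jpol) : Prop := exists t, forall s s', 0 < Pn mu t s s'.

Definition is_stationary (mu : jpol) (pi : S -> R) : Prop :=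
  (forall s, 0 <= pi s) /\ \sum_(s : S) pi s = 1 /\
  (forall s', \sum_(s : S) pi s * PT mu s s' = pi s').
(* the stationary distribution (unique under ergodicity) *)
Definition stat (mu : jpol) : S -> R :=
  epsilon (inhabits (fun _ => 0)) (is_stationary mu).

Definition eta (mu : jpol) : R :=
  \sum_(s : S) stat mu s * \sum_(a : jact) jprob mu s a * r s a.
Definition zeta (mu : jpol) : R :=
  \sum_(s : S) stat mu s * \sum_(a : jact) jprob mu s a * (r s a - eta mu) ^+ 2.
Definition J (mu : jpol) : R := eta mu - beta * zeta mu.

Definition fsa (mu : jpol) (s : S) (a : jact) : R := r s a - beta * (r s a - eta mu) ^+ 2.
Definition fs (mu : jpol) (s : S) : R := \sum_(a : jact) jprob mu s a * fsa mu s a.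

Definition poisson (mu : jpol) (V : S -> R) : Prop :=
  forall s, V s = fs mu s - J mu + \sum_(s' : S) PT mu s s' * V s'.
(* a solution of the Poisson equation (unique up to an additive constant) *)
Definition Vf (mu : jpol) : S -> R := epsilon (inhabits (fun _ => 0)) (poisson mu).
Definition Qf (mu : jpol) (s : S) (a : jact) : R :=
  fsa mu s a - J mu + \sum_(s' : S) P s a s' * Vf mu s'.
Definition Af (mu : jpol) (s : S) (a : jact) : R := Qf mu s a - Vf mu s.

Definition EA (mu : jpol) (i : 'I_N) (s : S) (ai : A i) : R :=
  \sum_(a : jact | a i == ai) (\prod_(j < N | j != i) mu j s (a j)) * Af mu s a.

Definition is_argmax (mu : jpol) (i : 'I_N) (s : S) (ai : A i) : Prop :=
  forall b : A i, EA mu i s b <= EA mu i s ai.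

(* one sweep of MV-MAPI from d with order sigma 0, ..., sigma (N-1), producing d' *)
Definition hat (d d' : dpol) (sigma : {perm 'I_N}) (h : nat) : dpol :=
  fun i => if [exists k : 'I_N, (k < h)%N && (sigma k == i)] then d' i else d i.
Definition sweep (d : dpol) (sigma : {perm 'I_N}) (d' : dpol) : Prop :=
  forall h : 'I_N, forall s : S,
    is_argmax (detp (hat d d' sigma h)) (sigma h) s (d' (sigma h) s) /\
    (is_argmax (detp (hat d d' sigma h)) (sigma h) s (d (sigma h) s) ->
       d' (sigma h) s = d (sigma h) s).

(* MVret d0 dt : some run of MV-MAPI from d0 returns dt *)
Inductive MVret : dpol -> dpol -> Prop :=
  | MVret_stop (d : dpol) (sigma : {perm 'I_N}) :
      sweep d sigma d -> MVret d d
  | MVret_step (d d' dt : dpol) (sigma : {perm 'I_N}) :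
      sweep d sigma d' -> d' <> d -> MVret d' dt -> MVret d dt.

Definition Dset (dt : dpol) (i : 'I_N) (di : S -> A i) : Prop :=
  di <> dt i /\ forall s, is_argmax (detp dt) i s (di s).

(* ModOut d0 dt : some run of Modified MV-MAPI from d0 outputs dt
   (together with the sets Dset dt i) *)
Inductive ModOut : dpol -> dpol -> Prop :=
  | ModOut_out (d0 dt : dpol) :
      MVret d0 dt ->
      (forall i (di : S -> A i), Dset dt i di -> eta (detp (dupd dt i di)) = eta (detp dt)) ->
      ModOut d0 dt
  | ModOut_restart (d0 d1 dt : dpol) (i : 'I_N) (di : S -> A i) :
      MVret d0 d1 ->
      (forall (j : 'I_N) (dj : S -> A j), (j < i)%N -> Dset d1 j dj ->
          eta (detp (dupd d1 j dj)) = eta (detp d1)) ->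
      Dset d1 i di -> eta (detp (dupd d1 i di)) <> eta (detp d1) ->
      ModOut (dupd d1 i di) dt ->
      ModOut d0 dt.

Definition Dmu (dt : dpol) (d : dpol) : Prop :=
  exists i (di : S -> A i), Dset dt i di /\ d = dupd dt i di.

End MVGame.

Arguments is_policy {R N A S}.
Arguments detp {R N A S}.
Arguments jprob {R N A S}.
Arguments upd {R N A S}.
Arguments dupd {N A S}.
Arguments mixpol {R N A S}.
Arguments PT {R N A S}.
Arguments Pn {R N A S}.
Arguments ergodic {R N A S}.
Arguments is_stationary {R N A S}.
Arguments stat {R N A S}.
Arguments eta {R N A S}.
Arguments zeta {R N A S}.
Arguments J {R N A S}.
Arguments fsa {R N A S}.
Arguments fs {R N A S}.
Arguments poisson {R N A S}.
Arguments Vf {R N A S}.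
Arguments Qf {R N A S}.
Arguments Af {R N A S}.
Arguments EA {R N A S}.
Arguments is_argmax {R N A S}.
Arguments hat {N A S}.
Arguments sweep {R N A S}.
Arguments MVret {R N A S}.
Arguments Dset {R N A S}.
Arguments ModOut {R N A S}.
Arguments Dmu {R N A S}.

(* Main.v *)
Require Import Defs.
From HB Require Import structures.
From mathcomp Require Import all_boot all_order all_algebra all_fingroup.
From mathcomp Require Import reals.
From Stdlib Require Import ClassicalEpsilon FunctionalExtensionality Classical.
Import Order.TTheory GRing.Theory Num.Theory.
Local Open Scope ring_scope.
From mathcomp Require Import ring lra.
Set Warnings "-notation-overridden -ambiguous-paths -deprecated".
Lemma sum_prod_dep (R : comNzRingType) (I : finType) (T_ : I -> finType)
  (P_ : forall i : I, {ffun T_ i -> R}) :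
  \sum_(a : {dffun forall i, T_ i}) \prod_i P_ i (a i) = \prod_i \sum_(b : T_ i) P_ i b.
Proof.
under [RHS]eq_bigr do rewrite (big_tag (fun i b => P_ i b)).
rewrite bigA_distr_big_dep.
rewrite -(big_fprod _ _ (fun i => P_ i)) /=.
rewrite (reindex (@dffun_of_fprod I T_)); last first.
  exact/onW_bij/dffun_of_fprod_bij.
by apply: eq_bigr => t _; apply: eq_bigr => i _; rewrite ffunE.
Qed.

Lemma exists_max (R : realType) (T : finType) (t0 : T) (F : T -> R) :
  exists m, forall t, F t <= F m.
Proof.
case: (@arg_maxP _ _ T t0 xpredT F isT) => m _ H; exists m => t; exact: H.
Qed.

Lemma finite_pos (R : realType) (T : finType) (Q : T -> R -> Prop) :
  (forall x e e', Q x e -> 0 < e' <= e -> Q x e') ->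
  (forall x, exists e, 0 < e /\ Q x e) ->
  exists e, 0 < e <= 1 /\ forall x, Q x e.
Proof.
move=> Qmono Qex.
suff: forall l : seq T, exists e, 0 < e <= 1 /\ forall x, x \in l -> Q x e.
  case/(_ (enum T)) => e [He H]; exists e; split => // x; apply: H; by rewrite mem_enum.
elim=> [|y l [e [/andP[e0 e1] H]]]; first by exists 1; split => //; rewrite ltr01 lexx.
case: (Qex y) => ey [ey0 Hy].
exists (Num.min e ey); split.
  by rewrite lt_min e0 ey0 /= ge_min e1.
move=> x; rewrite inE => /orP[/eqP->|xl].
  apply: Qmono Hy _; by rewrite lt_min e0 ey0 /= ge_min lexx orbT.
apply: Qmono (H x xl) _; by rewrite lt_min e0 ey0 /= ge_min lexx.
Qed.

Section Main.
Variables (R : realType) (N : nat) (A : 'I_N -> finType) (S : finType).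
Variables (P : S -> jact N A -> S -> R) (r : S -> jact N A -> R) (beta : R).
Hypothesis P_ge0 : forall s a s', 0 <= P s a s'.
Hypothesis P_sum1 : forall s a, \sum_(s' : S) P s a s' = 1.
Hypothesis beta_ge0 : 0 <= beta.
Hypothesis erg : forall mu : jpol R N A S, is_policy mu -> ergodic P mu.

Implicit Types (mu : jpol R N A S) (d : dpol N A S).

Lemma sum_delta_l (x : S) (F : S -> R) : \sum_(s : S) (x == s)%:R * F s = F x.
Proof.
rewrite (bigD1 x) //= eqxx mul1r big1 ?addr0 // => s ns.
by rewrite eq_sym (negbTE ns) mul0r.
Qed.

Lemma sum_delta_r (x : S) (F : S -> R) : \sum_(s : S) F s * (s == x)%:R = F x.
Proof.
rewrite (bigD1 x) //= eqxx mulr1 big1 ?addr0 // => s ns.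
by rewrite (negbTE ns) mulr0.
Qed.

Lemma jprob_ge0 mu s a : is_policy mu -> 0 <= jprob mu s a.
Proof. move=> H; apply: prodr_ge0 => i _; exact: (H i s).1. Qed.

Lemma jprob_sum1 mu s : is_policy mu -> \sum_(a : jact N A) jprob mu s a = 1.
Proof.
move=> H; rewrite /jprob.
transitivity (\sum_(a : jact N A) \prod_i [ffun b => mu i s b] (a i)).
  by apply: eq_bigr => a _; apply: eq_bigr => i _; rewrite ffunE.
rewrite sum_prod_dep; apply: big1 => i _; rewrite -(H i s).2.
by apply: eq_bigr => b _; rewrite ffunE.
Qed.

Lemma PT_ge0 mu s s' : is_policy mu -> 0 <= PT P mu s s'.
Proof. move=> H; apply: sumr_ge0 => a _; apply: mulr_ge0 => //; exact: jprob_ge0. Qed.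

Lemma PT_sum1 mu s : is_policy mu -> \sum_(s' : S) PT P mu s s' = 1.
Proof.
move=> H; rewrite /PT exchange_big /=.
under eq_bigr do rewrite -mulr_sumr P_sum1 mulr1.
exact: jprob_sum1.
Qed.

Lemma Pn_ge0 mu t s s' : is_policy mu -> 0 <= Pn P mu t s s'.
Proof.
move=> H; elim: t s s' => [|t IH] s s' /=; first by rewrite ler0n.
by apply: sumr_ge0 => u _; apply: mulr_ge0 => //; exact: PT_ge0.
Qed.

Lemma Pn_sum1 mu t s : is_policy mu -> \sum_(s' : S) Pn P mu t s s' = 1.
Proof.
move=> H; elim: t s => [|t IH] s /=.
  by rewrite -[RHS](sum_delta_l s (fun _ => 1)); apply: eq_bigr => s' _; rewrite mulr1.
rewrite exchange_big /=; under eq_bigr do rewrite -mulr_sumr PT_sum1 // mulr1.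
exact: IH.
Qed.

Lemma Pn_stat mu pi t s' : is_stationary P mu pi ->
  \sum_(s : S) pi s * Pn P mu t s s' = pi s'.
Proof.
move=> [_ [_ H]]; elim: t s' => [|t IH] s' /=; first exact: sum_delta_r.
under eq_bigr do rewrite mulr_sumr.
rewrite exchange_big /= -[RHS]H; apply: eq_bigr => u _.
by rewrite -IH mulr_suml; apply: eq_bigr => s _; rewrite mulrA.
Qed.

Lemma Pn_harm mu (x : S -> R) t s :
  (forall s, x s = \sum_(s' : S) PT P mu s s' * x s') ->
  x s = \sum_(s' : S) Pn P mu t s s' * x s'.
Proof.
move=> H; elim: t s => [|t IH] s /=; first by rewrite sum_delta_l.
under eq_bigr do rewrite mulr_suml.
rewrite exchange_big /= IH; apply: eq_bigr => u _.
by rewrite H mulr_sumr; apply: eq_bigr => s' _; rewrite mulrA.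
Qed.

Lemma harm_const mu (x : S -> R) (s0 : S) : is_policy mu ->
  (forall s, x s = \sum_(s' : S) PT P mu s s' * x s') ->
  forall s, x s = x s0.
Proof.
move=> Hmu H.
case: (@exists_max R _ s0 x) => m Hm.
case: (erg _ Hmu) => t Ht.
have E: forall s, x s = x m.
  have Z: \sum_(s' : S) Pn P mu t m s' * (x m - x s') = 0.
    under eq_bigr do rewrite mulrBr.
    by rewrite sumrB -mulr_suml Pn_sum1 // mul1r -Pn_harm // subrr.
  have nn: forall s', true -> 0 <= Pn P mu t m s' * (x m - x s').
    by move=> s' _; apply: mulr_ge0; [exact: Pn_ge0 | rewrite subr_ge0].
  move=> s; have /eqP := psumr_eq0P nn Z (i:=s) isT.
  by rewrite mulf_eq0 subr_eq0 gt_eqF ?Ht //= => /eqP.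
by move=> s; rewrite !E.
Qed.

Lemma sumS (F : S -> R) : \sum_(s : S) F s = \sum_(k < #|S|) F (enum_val k).
Proof. by rewrite (reindex (@enum_val S (pred_of_argType S))) //=; apply/onW_bij/enum_val_bij. Qed.

Variable s0 : S.

Lemma stat_exists mu : is_policy mu -> exists pi, is_stationary P mu pi.
Proof.
move=> Hmu.
pose B : 'M[R]_#|S| := \matrix_(k, j)
  ((enum_val k == enum_val j)%:R - PT P mu (enum_val k) (enum_val j)).
have nU : B \notin unitmx.
  apply/negP => U.
  pose c : 'cV[R]_#|S| := const_mx 1.
  have Bc : B *m c = 0.
    apply/matrixP => k j; rewrite !mxE.
    under eq_bigr do rewrite !mxE mulr1.
    rewrite -(sumS (fun s => (enum_val k == s)%:R - PT P mu (enum_val k) s)).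
    rewrite sumrB PT_sum1 //.
    have -> : \sum_(s : S) (enum_val k == s)%:R = 1 :> R.
      by rewrite (eq_bigr (fun s => (enum_val k == s)%:R * 1)) ?sum_delta_l // => s _; rewrite mulr1.
    by rewrite subrr.
  have : c = 0 by rewrite -(mulKmx U c) Bc mulmx0.
  move/matrixP => /(_ (enum_rank s0) 0); rewrite !mxE => /eqP; by rewrite oner_eq0.
have nK : kermx B != 0 by rewrite kermx_eq0 row_free_unit.
have [k Hk]: exists k, row k (kermx B) != 0.
  case/boolP: [exists k, row k (kermx B) != 0] => [/existsP[k Hk]|/existsPn H].
    by exists k.
  move/negP: nK; case; apply/eqP/row_matrixP => k; rewrite row0.
  by apply/eqP; move: (H k); rewrite negbK.
pose u := row k (kermx B).
have uB : u *m B = 0 by rewrite /u -row_mul mulmx_ker row0.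
have [j Hj]: exists j, u 0 j != 0.
  case/boolP: [exists j, u 0 j != 0] => [/existsP[j Hj]|/existsPn H].
    by exists j.
  move/negP: Hk; case; apply/eqP/rowP => j; rewrite [RHS]mxE.
  by apply/eqP; move: (H j); rewrite negbK.
pose v s := u 0 (enum_rank s).
have Ev: forall s', \sum_(s : S) v s * PT P mu s s' = v s'.
  move=> s'; move/matrixP: uB => /(_ 0 (enum_rank s')); rewrite !mxE.
  under eq_bigr do rewrite [X in _ * X]mxE enum_rankK.
  rewrite (_ : \sum_k _ = \sum_(s : S) v s * ((s == s')%:R - PT P mu s s')); last first.
    by rewrite sumS; apply: eq_bigr => k' _; rewrite /v enum_valK.
  under eq_bigr do rewrite mulrBr.
  rewrite sumrB sum_delta_r => /eqP; rewrite subr_eq0 => /eqP ->.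
  by [].
pose w s := `|v s|.
have Hw: forall s', w s' <= \sum_(s : S) w s * PT P mu s s'.
  move=> s'; rewrite /w -Ev; apply: le_trans (ler_norm_sum _ _ _) _.
  apply: ler_sum => s _; rewrite normrM (ger0_norm (PT_ge0 _ _ _ Hmu)) //.
have Z: \sum_(s' : S) (\sum_(s : S) w s * PT P mu s s' - w s') = 0.
  rewrite sumrB exchange_big /=.
  under eq_bigr do rewrite -mulr_sumr PT_sum1 // mulr1.
  by rewrite subrr.
have Ew: forall s', \sum_(s : S) w s * PT P mu s s' = w s'.
  move=> s'; apply/eqP; rewrite -subr_eq0; apply/eqP.
  apply: (psumr_eq0P _ Z (i:=s')) => // s'' _; rewrite subr_ge0; exact: Hw.
have wpos: 0 < \sum_(s : S) w s.
  apply: (@lt_le_trans _ _ (w (enum_val j))).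
    by rewrite /w normr_gt0 /v enum_valK.
  rewrite (bigD1 (enum_val j)) //= lerDl; apply: sumr_ge0 => s _; exact: normr_ge0.
exists (fun s => w s / \sum_(s : S) w s); split; [|split].
- move=> s; apply: divr_ge0; [exact: normr_ge0| exact: ltW].
- by rewrite -mulr_suml mulfV // gt_eqF.
- move=> s'; under eq_bigr do rewrite mulrAC.
  by rewrite -mulr_suml Ew.
Qed.

Lemma poisson_exists mu pi (g : S -> R) : is_policy mu -> is_stationary P mu pi ->
  \sum_(s : S) pi s * g s = 0 ->
  exists V : S -> R, forall s, V s = g s + \sum_(s' : S) PT P mu s s' * V s'.
Proof.
move=> Hmu Hpi Hg; case: (Hpi) => [pi0 [pi1 piS]].
pose M : 'M[R]_#|S| := \matrix_(k, j) ((enum_val k == enum_val j)%:R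
    - PT P mu (enum_val j) (enum_val k) + pi (enum_val k)).
have Lrow: forall (x : 'rV[R]_#|S|) s', (x *m M) 0 (enum_rank s') =
    x 0 (enum_rank s') - \sum_(s : S) PT P mu s' s * x 0 (enum_rank s)
    + \sum_(s : S) pi s * x 0 (enum_rank s).
  move=> x s'; rewrite !mxE.
  under eq_bigr do rewrite [X in _ * X]mxE enum_rankK.
  have -> : \sum_k x 0 k * ((enum_val k == s')%:R - PT P mu s' (enum_val k) + pi (enum_val k))
     = \sum_(s : S) x 0 (enum_rank s) * ((s == s')%:R - PT P mu s' s + pi s).
    by rewrite sumS; apply: eq_bigr => k _; rewrite enum_valK.
  under eq_bigr do rewrite mulrDr mulrBr.
  rewrite big_split sumrB /= sum_delta_r.
  by congr (_ - _ + _); apply: eq_bigr => s _; rewrite mulrC.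
have key: forall (x : 'rV[R]_#|S|) (c0 : S -> R),
    (forall s, (x *m M) 0 (enum_rank s) = c0 s) ->
    \sum_(s : S) pi s * x 0 (enum_rank s) = \sum_(s : S) pi s * c0 s.
  move=> x c0 Hc.
  transitivity (\sum_(s' : S) pi s' * (x 0 (enum_rank s')
     - \sum_(s : S) PT P mu s' s * x 0 (enum_rank s)
     + \sum_(s : S) pi s * x 0 (enum_rank s))); last first.
    by apply: eq_bigr => s _; rewrite -Lrow Hc.
  under [RHS]eq_bigr do rewrite mulrDr mulrBr.
  rewrite big_split sumrB /= -mulr_suml pi1 mul1r.
  have -> : \sum_(s' : S) pi s' * \sum_(s : S) PT P mu s' s * x 0 (enum_rank s)
      = \sum_(s : S) pi s * x 0 (enum_rank s).
    under eq_bigr do rewrite mulr_sumr.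
    rewrite exchange_big /=; apply: eq_bigr => s _.
    rewrite -piS mulr_suml; apply: eq_bigr => s' _; by rewrite mulrA.
  by rewrite subrr add0r.
have U: M \in unitmx.
  rewrite -row_free_unit -kermx_eq0; apply/eqP/row_matrixP => k; rewrite row0.
  pose u := row k (kermx M).
  have uM: u *m M = 0 by rewrite /u -row_mul mulmx_ker row0.
  have C0: \sum_(s : S) pi s * u 0 (enum_rank s) = 0.
    rewrite (key u (fun _ => 0)); first by rewrite big1 // => s _; rewrite mulr0.
    by move=> s; rewrite uM mxE.
  have harm: forall s, u 0 (enum_rank s) = \sum_(s' : S) PT P mu s s' * u 0 (enum_rank s').
    move=> s; have := Lrow u s; rewrite uM mxE C0 addr0 => /eqP.
    by rewrite eq_sym subr_eq0 => /eqP.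
  have cst := harm_const _ _ s0 Hmu harm.
  have x0: u 0 (enum_rank s0) = 0.
    rewrite -C0; under eq_bigr do rewrite cst.
    by rewrite -mulr_suml pi1 mul1r.
  apply/rowP => j; rewrite [RHS]mxE; change (u 0 j = 0); have := cst (enum_val j).
  by rewrite enum_valK => ->; rewrite x0.
pose gr : 'rV[R]_#|S| := \row_j g (enum_val j).
pose x := gr *m invmx M.
have xM: x *m M = gr by rewrite /x mulmxKV.
have C0: \sum_(s : S) pi s * x 0 (enum_rank s) = 0.
  rewrite (key x g) // => s; by rewrite xM mxE enum_rankK.
exists (fun s => x 0 (enum_rank s)) => s.
have := Lrow x s; rewrite xM mxE enum_rankK C0 addr0 => ->.
by rewrite subrK.
Qed.

Lemma stat_spec mu : is_policy mu -> is_stationary P mu (stat P mu).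
Proof. move=> H; rewrite /stat; apply: epsilon_spec; exact: stat_exists. Qed.

Definition Ex mu (F : S -> jact N A -> R) :=
  \sum_(s : S) stat P mu s * \sum_(a : jact N A) jprob mu s a * F s a.

Lemma ExE mu c (F G : S -> jact N A -> R) :
  Ex mu (fun s a => c * F s a + G s a) = c * Ex mu F + Ex mu G.
Proof.
rewrite /Ex mulr_sumr -big_split /=; apply: eq_bigr => s _.
rewrite mulrCA -mulrDr; congr (_ * _); rewrite mulr_sumr -big_split /=.
by apply: eq_bigr => a _; rewrite mulrDr mulrCA.
Qed.

Lemma ExC mu c : is_policy mu -> Ex mu (fun _ _ => c) = c.
Proof.
move=> H; rewrite /Ex; under eq_bigr do rewrite -mulr_suml jprob_sum1 // mul1r.
by rewrite -mulr_suml (stat_spec _ H).2.1 mul1r.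
Qed.

Lemma eq_Ex mu (F G : S -> jact N A -> R) : (forall s a, F s a = G s a) -> Ex mu F = Ex mu G.
Proof.
by move=> H; apply: eq_bigr => s _; congr (_ * _); apply: eq_bigr => a _; rewrite H.
Qed.

Lemma ptw mu s (F : jact N A -> R) (h : S -> R) : is_policy mu ->
  \sum_(a : jact N A) jprob mu s a * (F a + \sum_(s' : S) P s a s' * h s' - h s)
  = \sum_(a : jact N A) jprob mu s a * F a + \sum_(s' : S) PT P mu s s' * h s' - h s.
Proof.
move=> H; under eq_bigr do rewrite mulrBr mulrDr.
rewrite sumrB big_split /= -mulr_suml jprob_sum1 // mul1r.
congr (_ + _ - _); rewrite /PT.
under eq_bigr do rewrite mulr_sumr.
rewrite exchange_big /=; apply: eq_bigr => s' _.
by rewrite mulr_suml; apply: eq_bigr => a _; rewrite mulrA.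
Qed.

Lemma cancel_h mu (F : S -> jact N A -> R) (h : S -> R) : is_policy mu ->
  Ex mu (fun s a => F s a + \sum_(s' : S) P s a s' * h s' - h s) = Ex mu F.
Proof.
move=> H; rewrite /Ex; under eq_bigr do rewrite ptw //.
under eq_bigr do rewrite mulrBr mulrDr.
rewrite sumrB big_split /=.
have [_ [_ St]] := stat_spec _ H.
have -> : \sum_(s : S) stat P mu s * \sum_(s' : S) PT P mu s s' * h s' =
          \sum_(s : S) stat P mu s * h s.
  under eq_bigr do rewrite mulr_sumr.
  rewrite exchange_big /=; apply: eq_bigr => s' _.
  by rewrite -St mulr_suml; apply: eq_bigr => s _; rewrite mulrA.
by rewrite addrK.
Qed.

Lemma J_as_Ex mu : is_policy mu -> Ex mu (fsa P r beta mu) = J P r beta mu.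
Proof.
move=> H.
rewrite (@eq_Ex mu _ (fun s a => 1 * r s a + ((- beta) * (r s a - Defs.eta P r mu) ^+ 2 + 0))).
  by rewrite !ExE ExC // mul1r addr0 mulNr.
by move=> s a; rewrite /fsa mul1r addr0 mulNr.
Qed.

Lemma Vf_spec mu : is_policy mu -> poisson P r beta mu (Vf P r beta mu).
Proof.
move=> Hmu; rewrite /Vf; apply: epsilon_spec.
have St := stat_spec _ Hmu.
have Hg : \sum_(s : S) stat P mu s * (fs P r beta mu s - J P r beta mu) = 0.
  under eq_bigr do rewrite mulrBr.
  rewrite sumrB -mulr_suml St.2.1 mul1r -(J_as_Ex _ Hmu) /Ex.
  by apply/eqP; rewrite subr_eq0; apply/eqP.
have [V HV] := poisson_exists _ _ (fun s => fs P r beta mu s - J P r beta mu) Hmu St Hg.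
by exists V.
Qed.

Lemma sum_Af mu s : is_policy mu ->
  \sum_(a : jact N A) jprob mu s a * Af P r beta mu s a = 0.
Proof.
move=> H; rewrite /Af /Qf.
have -> := ptw _ s (fun a => fsa P r beta mu s a - J P r beta mu) (Vf P r beta mu) H.
under eq_bigr do rewrite mulrBr.
rewrite sumrB -mulr_suml jprob_sum1 // mul1r.
have E := Vf_spec _ H s.
by rewrite -/(fs P r beta mu s) -E subrr.
Qed.

Lemma perf mu mu' : is_policy mu -> is_policy mu' ->
  J P r beta mu' - J P r beta mu =
  Ex mu' (Af P r beta mu) + beta * (Defs.eta P r mu' - Defs.eta P r mu) ^+ 2.
Proof.
move=> H H'.
have -> : Ex mu' (Af P r beta mu) = Ex mu' (fun s a => fsa P r beta mu s a - J P r beta mu).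
  exact: (cancel_h _ (fun s a => fsa P r beta mu s a - J P r beta mu) (Vf P r beta mu) H').
pose e := Defs.eta P r mu; pose e' := Defs.eta P r mu'.
rewrite (@eq_Ex mu' _ (fun s a => (1 - 2 * beta * (e' - e)) * r s a +
   ((- beta) * (r s a - e') ^+ 2 + (- beta * (e ^+ 2 - e' ^+ 2) - J P r beta mu)))).
  rewrite ExE ExE ExC //.
  rewrite /J -/e -/e'.
  have -> : Ex mu' r = e' by [].
  have -> : Ex mu' (fun s a => (r s a - e') ^+ 2) = zeta P r mu' by [].
  ring.
move=> s a; rewrite /fsa -/e; ring.
Qed.

Lemma eta_diff mu mu' (h : S -> R) : is_policy mu -> is_policy mu' ->
  (forall s, \sum_(a : jact N A) jprob mu s a *
      (r s a - Defs.eta P r mu + \sum_(s' : S) P s a s' * h s' - h s) = 0) ->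
  Defs.eta P r mu' - Defs.eta P r mu = \sum_(s : S) stat P mu' s *
     \sum_(a : jact N A) (jprob mu' s a - jprob mu s a) *
        (r s a - Defs.eta P r mu + \sum_(s' : S) P s a s' * h s' - h s).
Proof.
move=> H H' Hh.
transitivity (Ex mu' (fun s a => r s a - Defs.eta P r mu + \sum_(s' : S) P s a s' * h s' - h s)).
  rewrite (cancel_h _ (fun s a => r s a - Defs.eta P r mu) h H').
  rewrite (@eq_Ex mu' _ (fun s a => 1 * r s a + - Defs.eta P r mu)); last by move=> s a; rewrite mul1r.
  by rewrite ExE ExC // mul1r.
apply: eq_bigr => s _; congr (_ * _).
under [RHS]eq_bigr do rewrite mulrBl.
by rewrite sumrB Hh subr0.
Qed.

Lemma h_exists mu : is_policy mu -> exists h : S -> R, forall s,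
  \sum_(a : jact N A) jprob mu s a *
      (r s a - Defs.eta P r mu + \sum_(s' : S) P s a s' * h s' - h s) = 0.
Proof.
move=> H; have St := stat_spec _ H.
have Hg : \sum_(s : S) stat P mu s *
   (\sum_(a : jact N A) jprob mu s a * (r s a - Defs.eta P r mu)) = 0.
  have := ExE mu 1 r (fun _ _ => - Defs.eta P r mu); rewrite ExC // mul1r.
  rewrite /Ex => E; rewrite -[RHS](subrr (Defs.eta P r mu)) -[X in _ = X - _]/(Ex mu r) /Ex -E.
  by apply: eq_bigr => s _; congr (_ * _); apply: eq_bigr => a _; rewrite mul1r.
have [h Hh] := poisson_exists _ _
  (fun s => \sum_(a : jact N A) jprob mu s a * (r s a - Defs.eta P r mu)) H St Hg.
exists h => s; rewrite (ptw _ s (fun a => r s a - Defs.eta P r mu) h H).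
by rewrite -Hh subrr.
Qed.

Lemma upd_eq mu i (m : S -> A i -> R) : upd mu i m i = m.
Proof.
rewrite /upd; case: (i =P i) => [e|//]; by rewrite (eq_irrelevance e (erefl i)).
Qed.

Lemma upd_neq mu i j (m : S -> A i -> R) : i != j -> upd mu i m j = mu j.
Proof. by rewrite /upd => ne; case: (i =P j) => [e|//]; case/negP: ne; rewrite e. Qed.

Lemma dupd_eq d i (m : S -> A i) : dupd d i m i = m.
Proof.
rewrite /dupd; case: (i =P i) => [e|//]; by rewrite (eq_irrelevance e (erefl i)).
Qed.

Lemma dupd_neq d i j (m : S -> A i) : i != j -> dupd d i m j = d j.
Proof. by rewrite /dupd => ne; case: (i =P j) => [e|//]; case/negP: ne; rewrite e. Qed.

Lemma jprob_upd mu i (m : S -> A i -> R) s a :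
  jprob (upd mu i m) s a = m s (a i) * \prod_(j | j != i) mu j s (a j).
Proof.
rewrite /jprob (bigD1 i) //= upd_eq; congr (_ * _).
by apply: eq_bigr => j ji; rewrite upd_neq // eq_sym.
Qed.

Lemma jprob_dupd d i (m : S -> A i) s a :
  jprob (detp (R:=R) (dupd d i m)) s a =
  (a i == m s)%:R * \prod_(j | j != i) detp (R:=R) d j s (a j).
Proof.
rewrite /jprob (bigD1 i) //= {1}/detp dupd_eq; congr (_ * _).
by apply: eq_bigr => j ji; rewrite /detp dupd_neq // eq_sym.
Qed.

Lemma jprob_detp_split d i s a :
  jprob (detp (R:=R) d) s a =
  (a i == d i s)%:R * \prod_(j | j != i) detp (R:=R) d j s (a j).
Proof. by rewrite /jprob (bigD1 i). Qed.

Lemma mix_jprob dt i (di : S -> A i) (dl : R) s a :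
  jprob (mixpol dt i di dl) s a =
  (1 - dl) * jprob (detp dt) s a + dl * jprob (detp (dupd dt i di)) s a.
Proof.
rewrite /mixpol jprob_upd jprob_dupd (jprob_detp_split _ i).
by rewrite mulrDl !mulrA.
Qed.

Lemma sum_dupd_EA d i (m : S -> A i) s (F : jact N A -> R) :
  \sum_(a : jact N A) jprob (detp (dupd d i m)) s a * F a =
  \sum_(a : jact N A | a i == m s) (\prod_(j | j != i) detp (R:=R) d j s (a j)) * F a.
Proof.
rewrite [RHS]big_mkcond; apply: eq_bigr => a _; rewrite jprob_dupd.
by case: (a i == m s); rewrite /= ?mul1r ?mul0r.
Qed.

Lemma sum_detp_EA d i s (F : jact N A -> R) :
  \sum_(a : jact N A) jprob (detp d) s a * F a =
  \sum_(a : jact N A | a i == d i s) (\prod_(j | j != i) detp (R:=R) d j s (a j)) * F a.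
Proof.
rewrite [RHS]big_mkcond; apply: eq_bigr => a _; rewrite (jprob_detp_split _ i).
by case: (a i == d i s); rewrite /= ?mul1r ?mul0r.
Qed.

Lemma EA_dt d i s : EA P r beta (detp d) i s (d i s) =
  \sum_(a : jact N A) jprob (detp d) s a * Af P r beta (detp d) s a.
Proof. by rewrite (sum_detp_EA _ i). Qed.

Lemma EA_di d i (m : S -> A i) s : EA P r beta (detp d) i s (m s) =
  \sum_(a : jact N A) jprob (detp (dupd d i m)) s a * Af P r beta (detp d) s a.
Proof. by rewrite (sum_dupd_EA _ i m). Qed.

Lemma sum_ind (T : finType) (x : T) : \sum_(y : T) (y == x)%:R = 1 :> R.
Proof.
rewrite (bigD1 x) //= eqxx big1 ?addr0 // => y /negbTE -> //.
Qed.

Lemma detp_policy d : is_policy (detp (R:=R) d).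
Proof. move=> i s; split => [a|]; [exact: ler0n | exact: sum_ind]. Qed.

Lemma mix_policy dt i (di : S -> A i) (dl : R) : 0 <= dl <= 1 ->
  is_policy (mixpol dt i di dl).
Proof.
move=> /andP[d0 d1] j s; rewrite /mixpol.
case: (eqVneq i j) => [<-|ne]; last by rewrite upd_neq //; exact: detp_policy.
rewrite upd_eq; split => [a|].
  by apply: addr_ge0; apply: mulr_ge0; rewrite ?subr_ge0 ?ler0n.
by rewrite big_split /= -!mulr_sumr !sum_ind !mulr1 subrK.
Qed.

Lemma jprob_detp_eq d s a :
  jprob (detp (R:=R) d) s a = (a == [ffun i => d i s] :> jact N A)%:R.
Proof.
rewrite /jprob /detp; case: eqP => [->|ne].
  by apply: big1 => i _; rewrite ffunE eqxx.
have : ~~ [forall i, a i == d i s].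
  apply/negP => /forallP H; apply: ne; apply/ffunP => i; rewrite ffunE; exact/eqP/H.
rewrite negb_forall => /existsP [i Hi].
by rewrite (bigD1 i) //= (negbTE Hi) mul0r.
Qed.

Lemma sum_detp_eval d s (F : jact N A -> R) :
  \sum_(a : jact N A) jprob (detp d) s a * F a = F ([ffun i => d i s] : jact N A).
Proof.
under eq_bigr do rewrite jprob_detp_eq.
rewrite (bigD1 ([ffun i => d i s] : jact N A)) //= eqxx mul1r big1 ?addr0 // => a /negbTE ->.
by rewrite mul0r.
Qed.

Lemma MVret_sweep d0 dt : MVret P r beta d0 dt -> exists sigma, sweep P r beta dt sigma dt.
Proof. by elim => [d sigma H | d d' dt' sigma _ _ _ IH] //; exists sigma. Qed.

Lemma sweep_argmax dt sigma : sweep P r beta dt sigma dt ->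
  forall i s, is_argmax P r beta (detp dt) i s (dt i s).
Proof.
move=> H i s; have := (H (sigma^-1 i)%g s).1.
have -> : hat dt dt sigma (sigma^-1 i)%g = dt.
  by apply: functional_extensionality_dep => j; rewrite /hat; case: ifP.
by rewrite permKV.
Qed.

Lemma ModOut_props d0 dt : ModOut P r beta d0 dt ->
  (exists d0', MVret P r beta d0' dt) /\
  (forall i (di : S -> A i), Dset P r beta dt i di ->
     Defs.eta P r (detp (dupd dt i di)) = Defs.eta P r (detp dt)).
Proof.
elim => [d0' dt' H1 H2 | d0' d1 dt' i di _ _ _ _ _ IH] //.
by split => //; exists d0'.
Qed.

Lemma not_Dmu_self dt : ~ Dmu P r beta dt dt.
Proof.
case=> i [di [[ne _] E]]; apply: ne.
have := dupd_eq dt i di; rewrite -E => ->; by [].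
Qed.

Lemma part1a d0 dt d : ModOut P r beta d0 dt -> Dmu P r beta dt d ->
  J P r beta (detp dt) = J P r beta (detp d).
Proof.
move=> out [i [di [[ne Hdi] ->]]].
have [[d0' Hret] Heta] := ModOut_props _ _ out.
have [sigma Hsw] := MVret_sweep _ _ Hret.
have Hdt := sweep_argmax _ _ Hsw.
have E0: forall s, EA P r beta (detp dt) i s (dt i s) = 0.
  by move=> s; rewrite EA_dt sum_Af //; exact: detp_policy.
have E1: forall s, EA P r beta (detp dt) i s (di s) = 0.
  move=> s; apply/eqP; rewrite eq_le; apply/andP; split.
    rewrite -(E0 s); exact: (Hdt i s (di s)).
  rewrite -(E0 s); exact: (Hdi s (dt i s)).
apply/eqP; rewrite eq_sym -subr_eq0; apply/eqP.
rewrite (perf _ _ (detp_policy dt) (detp_policy _)) (Heta i di (conj ne Hdi)).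
rewrite subrr expr2 !mulr0 addr0.
rewrite /Ex big1 // => s _; by rewrite -EA_di E1 mulr0.
Qed.

Definition tod (g : {ffun S -> jact N A}) : dpol N A S := fun i s => g s i.

Lemma greedy mu : is_policy mu -> exists g, J P r beta mu <= J P r beta (detp (tod g)).
Proof.
move=> Hmu.
have a0 : jact N A.
  case: (pickP (@predT (jact N A))) => [a _|e]; first exact a.
  exfalso; have := jprob_sum1 mu s0 Hmu; rewrite big1 => [/eqP|a _].
    by rewrite eq_sym oner_eq0.
  by have := e a.
pose g := [ffun s => Order.arg_max a0 xpredT (Af P r beta mu s)].
exists g.
have Hg: forall s (a : jact N A), Af P r beta mu s a <= Af P r beta mu s (g s).
  move=> s a; rewrite /g ffunE.
  case: (@arg_maxP _ _ _ a0 xpredT (Af P r beta mu s) isT) => m _ Hm; exact: Hm.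
have Hd := detp_policy (tod g).
rewrite -subr_ge0 (perf _ _ Hmu Hd).
apply: addr_ge0; last by apply: mulr_ge0 => //; exact: sqr_ge0.
apply: sumr_ge0 => s _; apply: mulr_ge0; first exact: (stat_spec _ Hd).1.
rewrite sum_detp_eval.
have -> : ([ffun i => tod g i s] : jact N A) = g s by apply/ffunP => i; rewrite ffunE.
have -> : Af P r beta mu s (g s) =
   \sum_(a : jact N A) jprob mu s a * Af P r beta mu s (g s).
  by rewrite -mulr_suml jprob_sum1 // mul1r.
rewrite -{1}(sum_Af mu s Hmu); apply: ler_sum => a _; apply: ler_wpM2l; [exact: jprob_ge0 | exact: Hg].
Qed.

Lemma part1b d0 dt : ModOut P r beta d0 dt -> exists dstar : dpol N A S,
  ~ Dmu P r beta dt dstar /\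
  forall mu, is_policy mu -> J P r beta mu <= J P r beta (detp dstar).
Proof.
move=> out.
case: (classic (exists mu, is_policy mu)) => [[mu0 H0]|nomu]; last first.
  exists dt; split; first exact: not_Dmu_self.
  by move=> mu Hmu; exfalso; apply: nomu; exists mu.
have [g0 _] := greedy mu0 H0.
have [gm Hgm] := @exists_max R _ g0 (fun g => J P r beta (detp (tod g))).
case: (classic (Dmu P r beta dt (tod gm))) => HD.
  exists dt; split; first exact: not_Dmu_self.
  move=> mu Hmu; have [g Hg] := greedy mu Hmu.
  rewrite (part1a _ _ _ out HD); exact: le_trans Hg (Hgm g).
exists (tod gm); split => // mu Hmu; have [g Hg] := greedy mu Hmu.
exact: le_trans Hg (Hgm g).
Qed.

Lemma PT_mix_ge dt i (di : S -> A i) dl s s' : 0 <= dl <= 1 ->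
  (1 - dl) * PT P (detp dt) s s' <= PT P (mixpol dt i di dl) s s'.
Proof.
move=> /andP[d0 d1]; rewrite /PT mulr_sumr; apply: ler_sum => a _.
rewrite mix_jprob [in X in _ <= X]mulrDl -!mulrA lerDl; apply: mulr_ge0 => //; apply: mulr_ge0 => //.
exact: jprob_ge0 (detp_policy _).
Qed.

Lemma Pn_mix_ge dt i (di : S -> A i) dl t s s' : 0 <= dl <= 1 ->
  (1 - dl) ^+ t * Pn P (detp dt) t s s' <= Pn P (mixpol dt i di dl) t s s'.
Proof.
move=> Hd; have /andP[d0 d1] := Hd.
elim: t s s' => [|t IH] s s' /=; first by rewrite expr0 mul1r.
rewrite mulr_sumr; apply: ler_sum => u _.
have -> : (1 - dl) ^+ t.+1 * (Pn P (detp dt) t s u * PT P (detp dt) u s') =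
   ((1 - dl) ^+ t * Pn P (detp dt) t s u) * ((1 - dl) * PT P (detp dt) u s').
  by rewrite exprSr; ring.
apply: ler_pM.
- by apply: mulr_ge0; [apply: exprn_ge0; rewrite subr_ge0 | exact: Pn_ge0 (detp_policy _)].
- by apply: mulr_ge0; [rewrite subr_ge0 | exact: PT_ge0 (detp_policy _)].
- exact: IH.
- exact: PT_mix_ge.
Qed.

Lemma part2_local d0 dt i (di : S -> A i) : ModOut P r beta d0 dt ->
  di <> dt i -> ~ Dmu P r beta dt (dupd dt i di) ->
  exists e, 0 < e /\ forall dl, 0 < dl <= e ->
    J P r beta (mixpol dt i di dl) < J P r beta (detp dt).
Proof.
move=> out ne nD.
have [[d0' Hret] _] := ModOut_props _ _ out.
have [sigma Hsw] := MVret_sweep _ _ Hret.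
have Hdt := sweep_argmax _ _ Hsw.
have H0 := detp_policy dt.
have E0: forall s, EA P r beta (detp dt) i s (dt i s) = 0.
  by move=> s; rewrite EA_dt sum_Af.
have Ele: forall s, EA P r beta (detp dt) i s (di s) <= 0.
  by move=> s; rewrite -(E0 s); exact: (Hdt i s (di s)).
have [s1 Hs1]: exists s1, EA P r beta (detp dt) i s1 (di s1) < 0.
  apply: NNPP => H; apply: nD; exists i, di; split => //; split => // s b.
  have h1 : ~~ (EA P r beta (detp dt) i s (di s) < 0).
    by apply/negP => Hl; apply: H; exists s.
  rewrite -leNgt in h1.
  apply: le_trans (Hdt i s b) _; by rewrite E0.
set D1 := EA P r beta (detp dt) i s1 (di s1).
have [t Ht] := erg _ H0.
have [smin Hsmin] := @exists_max R _ s0 (fun s => - Pn P (detp dt) t s s1).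
set m := Pn P (detp dt) t smin s1.
have m0 : 0 < m by exact: Ht.
have Hm : forall s, m <= Pn P (detp dt) t s s1.
  by move=> s; have := Hsmin s; rewrite lerN2.
have [h Hh] := h_exists _ H0.
pose q := fun s a => r s a - Defs.eta P r (detp dt) + \sum_(s' : S) P s a s' * h s' - h s.
pose X := fun s => \sum_(a : jact N A)
   (jprob (detp (dupd dt i di)) s a - jprob (detp dt) s a) * q s a.
pose K := \sum_(s : S) `|X s|.
have K0 : 0 <= K by apply: sumr_ge0 => s _; exact: normr_ge0.
pose p0 := (2^-1) ^+ t * m.
have p00 : 0 < p0 by apply: mulr_gt0 => //; apply: exprn_gt0; rewrite invr_gt0.
pose c := p0 * (- D1).
have c0 : 0 < c by apply: mulr_gt0 => //; rewrite oppr_gt0.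
have den0 : 0 < beta * K ^+ 2 + 1.
  by apply: ltr_wpDl => //; apply: mulr_ge0 => //; exact: sqr_ge0.
exists (Num.min (2^-1) (c / (beta * K ^+ 2 + 1))); split.
  by rewrite lt_min invr_gt0 ltr0n /= divr_gt0.
move=> dl /andP[dl0]; rewrite le_min => /andP[dlh dlc].
have dl1 : 0 <= dl <= 1 by apply/andP; split; [exact: ltW | apply: le_trans dlh _; lra].
have Hmix := mix_policy dt i di dl dl1.
have St := stat_spec _ Hmix.
pose pi := stat P (mixpol dt i di dl).
have EEx : Ex (mixpol dt i di dl) (Af P r beta (detp dt)) =
    \sum_(s : S) pi s * (dl * EA P r beta (detp dt) i s (di s)).
  rewrite /Ex; apply: eq_bigr => s _; congr (_ * _).
  under eq_bigr do rewrite mix_jprob mulrDl -!mulrA.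
  by rewrite big_split /= -!mulr_sumr -(EA_dt _ i) E0 mulr0 add0r -EA_di.
have pi_ge0 : forall s, 0 <= pi s by move=> s; exact: St.1.
have pi_le1 : forall s, pi s <= 1.
  move=> s; rewrite -St.2.1 (bigD1 s) //= lerDl; apply: sumr_ge0 => s' _; exact: pi_ge0.
have Ex_le : Ex (mixpol dt i di dl) (Af P r beta (detp dt)) <= pi s1 * (dl * D1).
  rewrite EEx (bigD1 s1) //= gerDl; apply: sumr_le0 => s _.
  apply: mulr_ge0_le0 => //; apply: mulr_ge0_le0; [exact: ltW | exact: Ele].
have pi_lb : p0 <= pi s1.
  rewrite /pi -(Pn_stat _ _ t _ St).
  apply: (@le_trans _ _ (\sum_(s : S) pi s * p0)).
    by rewrite -mulr_suml St.2.1 mul1r.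
  apply: ler_sum => s _; apply: ler_wpM2l => //.
  apply: le_trans (Pn_mix_ge dt i di dl t s s1 dl1).
  rewrite /p0; apply: ler_pM => //.
  - by apply: exprn_ge0; rewrite invr_ge0.
  - by apply: ltW.
  - by apply: lerXn2r; rewrite ?nnegrE ?invr_ge0 ?subr_ge0 //; lra.
have Deta : Defs.eta P r (mixpol dt i di dl) - Defs.eta P r (detp dt) =
    \sum_(s : S) pi s * (dl * X s).
  rewrite (eta_diff _ _ h H0 Hmix Hh); apply: eq_bigr => s _; congr (_ * _).
  rewrite /X mulr_sumr; apply: eq_bigr => a _; rewrite mix_jprob /q; ring.
have Deta_le : `|Defs.eta P r (mixpol dt i di dl) - Defs.eta P r (detp dt)| <= dl * K.
  rewrite Deta; apply: le_trans (ler_norm_sum _ _ _) _.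
  rewrite /K mulr_sumr; apply: ler_sum => s _.
  rewrite normrM normrM (ger0_norm (pi_ge0 s)) (ger0_norm (ltW dl0)).
  rewrite -[X in _ <= X]mul1r; apply: ler_wpM2r; last exact: pi_le1.
  by apply: mulr_ge0; [exact: ltW | exact: normr_ge0].
move: Deta_le; rewrite ler_norml => /andP[Dl Du].
set x := Defs.eta P r (mixpol dt i di dl) - Defs.eta P r (detp dt) in Dl Du.
have Hx2 : x ^+ 2 <= (dl * K) ^+ 2 by nra.
have Hb : beta * x ^+ 2 <= beta * (dl * K) ^+ 2 by apply: ler_wpM2l.
have Hperf := perf _ _ H0 Hmix.
rewrite -/x in Hperf.
have F1 : dl * (beta * K ^+ 2 + 1) <= c by rewrite -ler_pdivlMr.
have Hfirst : pi s1 * (dl * D1) <= - (dl * c).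
  have -> : - (dl * c) = (dl * D1) * p0 by rewrite /c; ring.
  rewrite mulrC; apply: ler_wnM2l; last exact: pi_lb.
  by apply: mulr_ge0_le0; [exact: ltW | exact: ltW].
have Hsecond : beta * (dl * K) ^+ 2 <= dl * (c - dl).
  have -> : beta * (dl * K) ^+ 2 = dl * (dl * (beta * K ^+ 2)) by ring.
  apply: ler_wpM2l; first exact: ltW.
  lra.
have dl2 : 0 < dl * dl by apply: mulr_gt0.
rewrite -subr_lt0 Hperf.
lra.
Qed.

Lemma main_ne d0 dt : ModOut P r beta d0 dt ->
  ((forall d : dpol N A S, Dmu P r beta dt d ->
      J P r beta (detp dt) = J P r beta (detp d)) /\
   exists dstar : dpol N A S, ~ Dmu P r beta dt dstar /\
      forall mu : jpol R N A S, is_policy mu ->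
        J P r beta mu <= J P r beta (detp dstar)) /\
  (exists dbar : R, 0 < dbar <= 1 /\
     forall delta : R, 0 < delta <= dbar ->
     forall (i : 'I_N) (di : S -> A i),
       di <> dt i -> ~ Dmu P r beta dt (dupd dt i di) ->
       J P r beta (mixpol dt i di delta) < J P r beta (detp dt)).
Proof.
move=> out; split; first split.
- move=> d; exact: part1a out.
- exact: part1b out.
pose Q := fun (x : {i : 'I_N & {ffun S -> A i}}) (e : R) =>
  forall dl, 0 < dl <= e -> (tagged x : S -> A (tag x)) <> dt (tag x) ->
    ~ Dmu P r beta dt (dupd dt (tag x) (tagged x)) ->
    J P r beta (mixpol dt (tag x) (tagged x) dl) < J P r beta (detp dt).
have [e [He HQ]] : exists e, 0 < e <= 1 /\ forall x, Q x e.
  apply: finite_pos.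
    move=> x e e' H /andP[e'0 e'e] dl /andP[dl0 dle]; apply: H.
    by rewrite dl0 (le_trans dle e'e).
  move=> [i f].
  case: (classic ((f : S -> A i) <> dt i /\ ~ Dmu P r beta dt (dupd dt i f))) => [[H1 H2]|H].
    have [e [e0 He]] := part2_local _ _ _ _ out H1 H2.
    by exists e; split => // dl Hdl _ _; exact: He.
  by exists 1; split => // dl _ H1 H2; exfalso; apply: H.
exists e; split => // dl Hdl i di H1 H2.
have Ef : (fun_of_fin [ffun s => di s] : S -> A i) = di.
  by apply: functional_extensionality => s; rewrite ffunE.
have := HQ (Tagged (fun i => {ffun S -> A i}) [ffun s => di s]) dl Hdl.
rewrite /= Ef; apply => //.
Qed.

End Main.

Theorem theorem4 (R : realType) (N : nat) (A : 'I_N -> finType) (S : finType)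
  (P : S -> jact N A -> S -> R) (r : S -> jact N A -> R) (beta : R)
  (P_ge0 : forall s a s', 0 <= P s a s')
  (P_sum1 : forall s a, \sum_(s' : S) P s a s' = 1)
  (beta_ge0 : 0 <= beta)
  (erg : forall mu : jpol R N A S, is_policy mu -> ergodic P mu)
  (d0 dt : dpol N A S)
  (out : ModOut P r beta d0 dt) :
  (* (1) *)
  ((forall d : dpol N A S, Dmu P r beta dt d ->
      J P r beta (detp dt) = J P r beta (detp d)) /\
   exists dstar : dpol N A S, ~ Dmu P r beta dt dstar /\
      forall mu : jpol R N A S, is_policy mu ->
        J P r beta mu <= J P r beta (detp dstar)) /\
  (* (2) *)
  (exists dbar : R, 0 < dbar <= 1 /\
     forall delta : R, 0 < delta <= dbar ->
     forall (i : 'I_N) (di : S -> A i),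
       di <> dt i -> ~ Dmu P r beta dt (dupd dt i di) ->
       J P r beta (mixpol dt i di delta) < J P r beta (detp dt)).
Proof.
case: (pickP (@predT S)) => [s0 _|Se].
  exact: (@main_ne R N A S P r beta P_ge0 P_sum1 beta_ge0 erg s0 d0 dt out).
have J0 : forall mu : jpol R N A S, J P r beta mu = 0.
  move=> mu; rewrite /J /zeta /Defs.eta.
  by rewrite !big1 ?mulr0 ?subr0 // => s; have := Se s.
split; first split.
- by move=> d _; rewrite !J0.
- exists dt; split; first exact: (@not_Dmu_self R N A S P r beta dt).
  by move=> mu _; rewrite !J0.
exists 1; split; first by rewrite ltr01 lexx.
move=> dl _ i di H1 _; exfalso; apply: H1.
by apply: functional_extensionality => s; have := Se s.
Qed.
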